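(* Consider adversarial bandits with $K$ actions and $N$ experts with oblivious losses $\ell_t\in[0,1]^K$ and expert advice $E_{i,t}\in[K]$, and $L_T^*=\min_{i\in[N]}\sum_{t=1}^T\ell_{t,E_{i,t}}$. Let $\tilde\Phi(L)=\mathbb{E}[\min_{p\in\Delta_N}\langle L,p\rangle+F(p,Z)]$ with $\nabla\tilde\Phi\in\Delta_N$, and suppose the full-information GBPA with potential $\tilde\Phi$ is DiffStable($D_\infty$, $\|\cdot\|_\infty$) at level $\epsilon$, i.e. $D_\infty(\nabla\tilde\Phi(\sum_{s<t}v_s),\nabla\tilde\Phi(\sum_{s\le t}v_s))\le\epsilon\|v_t\|_\infty$ for all $t$ and all $v_1,\dots,v_t\in[0,\infty)^N$. Run the following algorithm without clipping: $\bar\phi_0=0$; for each $t$, $p_t=\nabla\tilde\Phi(\bar\phi_{t-1})$, $q_t=\psi_t(p_t)$ where $\psi_t(p)=\sum_{j=1}^K\sum_{i:E_{i,t}=j}p_i\mathbf{e}_j$; draw $j_t\sim q_t$, observe $\ell_{t,j_t}$, set $\hat\ell_t=\frac{\ell_{t,j_t}}{q_{t,j_t}}\mathbf{e}_{j_t}\in\mathbb{R}^K$ and $\bar\phi_t=\bar\phi_{t-1}+\phi_t(\hat\ell_t)$ where $\phi_t(\hat\ell)=\sum_{j=1}^K\sum_{i:E_{i,t}=j}\hat\ell_j\mathbf{e}_i\in\mathbb{R}^N$. Then \[\mathbb{E}\Big[\sum_{t=1}^T\ell_{t,j_t}\Big]-L_T^*\le\epsilon\,\mathbb{E}\Big[\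sum_{t=1}^T\hat\ell_{t,j_t}^2q_{t,j_t}\Big]+\mathbb{E}\Big[\max_pF(p,Z)-\min_pF(p,Z)\Big].\]
   Context: $\Delta_m$ is the probability simplex in $\mathbb{R}^m$; max and min over $p$ are over $\Delta_N$. For distributions $P,Q$, $D_\infty(P,Q)=\sup_B\log\frac{P(B)}{Q(B)}$. Expectations are over the learner's randomness and $Z$. *)

(* Defs.v *)
From HB Require Import structures.
From mathcomp Require Import all_boot all_order all_algebra.
From mathcomp Require Import all_classical all_reals all_analysis measurable_realfun.
Set Implicit Arguments. Unset Strict Implicit. Unset Printing Implicit Defensive.
Import Order.TTheory GRing.Theory Num.Theory.
Import numFieldNormedType.Exports.
Local Open Scope classical_set_scope.
Local Open Scope ring_scope.

Section Defs.
Variables (R : realType) (K N : nat).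

Definition simplex : set 'rV[R]_N :=
  [set p | (forall i, 0 <= p 0 i) /\ \sum_i p 0 i = 1].

Definition dotv (x y : 'rV[R]_N) : R := \sum_i x 0 i * y 0 i.

Definition infnorm (v : 'rV[R]_N) : R := \big[Num.max/0]_i `|v 0 i|.

(* D_infty(P,Q) = sup_B log (P(B)/Q(B)) for distributions on [N] given as
   vectors, with conventions log 0 = -oo and c/0 = +oo for c > 0. *)
Definition massB (p : 'rV[R]_N) (B : {set 'I_N}) : R := \sum_(i in B) p 0 i.
Definition Dinf_term (p q : 'rV[R]_N) (B : {set 'I_N}) : \bar R :=
  if massB p B == 0 then -oo%E
  else if massB q B == 0 then +oo%E
  else (ln (massB p B / massB q B))%:E.
Definition Dinf (p q : 'rV[R]_N) : \bar R :=
  \big[Order.max/-oo%E]_(B : {set 'I_N}) Dinf_term p q B.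

Definition psi (E : nat -> 'I_N -> 'I_K) (t : nat) (p : 'rV[R]_N) : 'rV[R]_K :=
  \row_j \sum_(i | E t i == j) p 0 i.

(* phi_t(lhat) = sum_j sum_{i : E_{i,t} = j} lhat_j e_i *)
Definition phi (E : nat -> 'I_N -> 'I_K) (t : nat) (lh : 'rV[R]_K) : 'rV[R]_N :=
  \row_i lh 0 (E t i).

Definition lhat (ell : nat -> 'I_K -> R) (t : nat) (q : 'rV[R]_K) (j : 'I_K)
  : 'rV[R]_K := \row_k (if k == j then ell t j / q 0 j else 0).

Section Algo.
Variables (g : 'rV[R]_N -> 'rV[R]_N) (E : nat -> 'I_N -> 'I_K)
  (ell : nat -> 'I_K -> R).

(* Histories are stored most-recent-first: j :: s means the actions of
   rounds 0..size s - 1 are s (reversed) and j is the action of round size s. *)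
Fixpoint phibar (s : seq 'I_K) : 'rV[R]_N :=
  match s with
  | [::] => 0
  | j :: s' =>
      let t := size s' in
      phibar s' + phi E t (lhat ell t (psi E t (g (phibar s'))) j)
  end.

(* q_t for the round following history s: q_t = psi_t (grad (phibar_{t-1})) *)
Definition qnext (s : seq 'I_K) : 'rV[R]_K := psi E (size s) (g (phibar s)).

Fixpoint histprob (s : seq 'I_K) : R :=
  match s with [::] => 1 | j :: s' => histprob s' * qnext s' 0 j end.

Fixpoint cumloss (s : seq 'I_K) : R :=
  match s with [::] => 0 | j :: s' => cumloss s' + ell (size s') j end.

Fixpoint hatterm (s : seq 'I_K) : R :=
  match s with
  | [::] => 0
  | j :: s' =>
      hatterm s' + (lhat ell (size s') (qnext s') j 0 j) ^+ 2 * qnext s' 0 j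
  end.

Definition Ealg (T : nat) (X : seq 'I_K -> R) : R :=
  \sum_(s : T.-tuple 'I_K) histprob s * X s.
End Algo.

Definition Lstar (E : nat -> 'I_N -> 'I_K) (ell : nat -> 'I_K -> R) (T : nat)
  : \bar R :=
  \big[Order.min/+oo%E]_(i : 'I_N) (\sum_(t < T) ell t (E t i))%:E.

End Defs.

Section Pert.
Local Open Scope ereal_scope.
Variables (R : realType) (N : nat) (d : measure_display) (Omega : measurableType d)
  (P : probability Omega R) (Zt : Type) (Z : Omega -> Zt)
  (F : 'rV[R]_N -> Zt -> R).

Definition pertmin (L : 'rV[R]_N) (w : Omega) : \bar R :=
  ereal_inf [set ((dotv L p + F p (Z w))%R)%:E | p in @simplex R N].

Definition Phitilde (L : 'rV[R]_N) : R := fine (\int[P]_w pertmin L w).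

Definition Frange (w : Omega) : \bar R :=
  ereal_sup [set (F p (Z w))%:E | p in @simplex R N]
  - ereal_inf [set (F p (Z w))%:E | p in @simplex R N].
End Pert.

(* Main.v *)
Require Import Defs.
From HB Require Import structures.
From mathcomp Require Import all_boot all_order all_algebra.
From mathcomp Require Import all_classical all_reals all_analysis measurable_realfun.
From mathcomp Require Import lra.
Import Order.TTheory GRing.Theory Num.Theory.
Import numFieldNormedType.Exports.
Local Open Scope classical_set_scope.
Local Open Scope ring_scope.
Lemma stab_lb (R : realType) (N : nat) (p p' : 'rV[R]_N) (c : R) :
  (forall i, 0 <= p 0 i) -> (forall i, 0 <= p' 0 i) ->
  (Dinf p p' <= c%:E)%E -> forall i, p 0 i * (1 - c) <= p' 0 i.
Proof.
move=> p0 p'0 HD i.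
have H : (Dinf_term p p' [set i] <= c%:E)%E.
  by apply: le_trans HD; rewrite /Dinf; apply: le_bigmax.
move: H; rewrite /Dinf_term /massB !big_set1.
have [->|pi0] := eqVneq (p 0 i) 0; first by rewrite mul0r.
have [->|p'i0] := eqVneq (p' 0 i) 0; first by rewrite leye_eq.
rewrite lee_fin => H.
have pp : 0 < p 0 i by rewrite lt_def pi0 p0.
have pp' : 0 < p' 0 i by rewrite lt_def p'i0 p'0.
have H2 : p 0 i / p' 0 i <= expR c.
  by rewrite -(lnK (x := p 0 i / p' 0 i)) ?ler_expR // posrE divr_gt0.
have H3 : p 0 i <= expR c * p' 0 i by rewrite -ler_pdivrMr.
apply: (@le_trans _ _ (p 0 i * expR (- c))).
  by rewrite ler_wpM2l // ?p0 // (le_trans _ (expR_ge1Dx _)) // addrC.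
by rewrite expRN ler_pdivrMr ?expR_gt0 // mulrC.
Qed.
Lemma mvt_step (R : realType) (N : nat) (Phi : 'rV[R]_N -> R) (g : 'rV[R]_N -> 'rV[R]_N) :
  (forall L, differentiable Phi L /\ forall h, 'd Phi L h = dotv h (g L)) ->
  forall L v, exists2 c : R, 0 < c < 1 & Phi (L + v) - Phi L = dotv v (g (L + c *: v)).
Proof.
move=> Hd L v.
pose f := fun s : R => Phi (L + s *: v).
have Hf : forall x : R, is_derive x 1 f (dotv v (g (L + x *: v))).
  move=> x.
  have E1 : (fun h : R => h^-1 *: ((f \o shift x) (h *: 1) - f x)) =
            (fun h : R => h^-1 *: ((Phi \o shift (L + x *: v)) (h *: v) - Phi (L + x *: v))).
    apply/funext => h /=; rewrite /f; congr (_ *: (Phi _ - _)).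
    by rewrite scaler1 scalerDl addrCA addrA.
  have Dd := (Hd (L + x *: v)).1.
  apply: DeriveDef.
    by rewrite /derivable E1; apply: diff_derivable.
  rewrite /derive E1 -/(derive Phi (L + x *: v) v) deriveE //.
  by rewrite (Hd _).2.
have Hcont : {within `[0, 1], continuous f}.
  apply: continuous_subspaceT => y.
  apply: continuous_comp.
    by apply: continuousD; [exact: cst_continuous | apply: continuousZl; exact: cvg_id].
  exact/differentiable_continuous/((Hd _).1).
have [c c01 Hc] := @MVT R f (fun x => dotv v (g (L + x *: v))) 0 1 ltr01
   (fun x _ => Hf x) Hcont.
exists c.
  by move: c01; rewrite in_itv.
by move: Hc; rewrite /f scale1r scale0r addr0 subr0 mulr1.
Qed.
Lemma infnorm_scale_le (R : realType) (N : nat) (c : R) (v : 'rV[R]_N) :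
  0 <= c <= 1 -> infnorm (c *: v) <= infnorm v.
Proof.
move=> /andP[c0 c1]; rewrite /infnorm; apply: bigmax_le.
  exact: bigmax_ge_id.
move=> i _; rewrite mxE normrM (ger0_norm c0).
apply: le_trans (le_bigmax _ _ i).
by rewrite ler_piMl.
Qed.
Lemma step (R : realType) (N : nat) (Phi : 'rV[R]_N -> R) (g : 'rV[R]_N -> 'rV[R]_N) (eps : R) :
  (forall L, differentiable Phi L /\ forall h, 'd Phi L h = dotv h (g L)) ->
  (forall L, @simplex R N (g L)) ->
  (forall (t : nat) (v : nat -> 'rV[R]_N),
     (forall s i, (s <= t)%N -> 0 <= v s 0 i) ->
     (Dinf (g (\sum_(s < t) v s)%R) (g (\sum_(s < t.+1) v s)%R)
        <= (eps * infnorm (v t))%:E)%E) ->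
  0 <= eps ->
  forall L v : 'rV[R]_N, (forall i, 0 <= L 0 i) -> (forall i, 0 <= v 0 i) ->
  dotv v (g L) - eps * infnorm v * dotv v (g L) <= Phi (L + v) - Phi L.
Proof.
move=> Hd Hg Hs eps0 L v L0 v0.
have [c /andP[c0 c1] ->] := @mvt_step _ _ _ _ Hd L v.
pose vv := fun s : nat => if s == 0%N then L else c *: v.
have Hvv : forall s i, (s <= 1)%N -> 0 <= vv s 0 i.
  move=> s i _; rewrite /vv; case: (s == 0%N) => //.
  by rewrite mxE mulr_ge0 // ltW.
have := Hs 1%N vv Hvv.
rewrite big_ord1 big_ord_recr big_ord1 /= /vv /= => HD.
have gpos : forall L i, 0 <= g L 0 i by move=> L' i; exact: ((Hg L').1 i).
have Hlb := @stab_lb _ _ _ _ _ (gpos L) (gpos _) HD.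
have dot0 : 0 <= dotv v (g L) by apply: sumr_ge0 => i _; rewrite mulr_ge0.
have inf0 : 0 <= infnorm v by exact: bigmax_ge_id.
have Hc : eps * infnorm (c *: v) <= eps * infnorm v.
  by rewrite ler_wpM2l // infnorm_scale_le // (ltW c0) (ltW c1).
apply: (@le_trans _ _ (dotv v (g L) * (1 - eps * infnorm (c *: v)))).
  rewrite mulrBr mulr1 lerB // mulrC ler_wpM2r //.
rewrite /dotv mulr_suml; apply: ler_sum => i _.
by rewrite -mulrA ler_wpM2l.
Qed.

Lemma sum_tuple_cons (R : realType) (K n : nat) (f : n.+1.-tuple 'I_K -> R) :
  \sum_(t : n.+1.-tuple 'I_K) f t = \sum_(j : 'I_K) \sum_(t : n.-tuple 'I_K) f [tuple of j :: t].
Proof.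
rewrite pair_big /=.
rewrite (reindex (fun p : 'I_K * n.-tuple 'I_K => [tuple of p.1 :: p.2])) //=.
exists (fun t : n.+1.-tuple 'I_K => (thead t, [tuple of behead t])).
  by move=> [j t] _ /=; congr pair; apply: val_inj.
by move=> t _ /=; rewrite [RHS]tuple_eta.
Qed.

Lemma sum_tuple0 (R : realType) (K : nat) (f : 0.-tuple 'I_K -> R) :
  \sum_(t : 0.-tuple 'I_K) f t = f [tuple].
Proof.
rewrite (eq_bigr (fun=> f [tuple])); last by move=> t _; rewrite (tuple0 t).
by rewrite sumr_const card_tuple expn0.
Qed.

Section Algo.
Variables (R : realType) (K N : nat) (g : 'rV[R]_N -> 'rV[R]_N)
  (E : nat -> 'I_N -> 'I_K) (ell : nat -> 'I_K -> R).
Hypothesis Hg : forall L, @simplex R N (g L).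

Local Notation q := (qnext g E ell).
Local Notation hp := (histprob g E ell).
Local Notation Ea := (Ealg g E ell).

Lemma q_ge0 s j : 0 <= q s 0 j.
Proof. by rewrite /qnext /psi mxE; apply: sumr_ge0 => i _; exact: (Hg _).1. Qed.

Lemma q_sum1 s : \sum_j q s 0 j = 1.
Proof.
rewrite /qnext /psi -(Hg (phibar g E ell s)).2.
rewrite (partition_big (E (size s)) xpredT) //=.
by apply: eq_bigr => j _; rewrite mxE.
Qed.

Lemma hp_ge0 s : 0 <= hp s.
Proof. elim: s => [|j s IH] //=; exact: mulr_ge0 (q_ge0 _ _). Qed.

Lemma Ealg_step n (X : seq 'I_K -> R) : Ea n.+1 X = Ea n (fun s => \sum_j q s 0 j * X (j :: s)).
Proof.
rewrite /Ealg sum_tuple_cons exchange_big /=.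
apply: eq_bigr => t _; rewrite mulr_sumr; apply: eq_bigr => j _.
by rewrite mulrA.
Qed.

Lemma Ealg_le n (X Y : seq 'I_K -> R) : (forall s : n.-tuple 'I_K, X s <= Y s) -> Ea n X <= Ea n Y.
Proof. by move=> H; apply: ler_sum => s _; rewrite ler_wpM2l // hp_ge0. Qed.

Lemma Ealg_D n (X Y : seq 'I_K -> R) : Ea n (fun s => X s + Y s) = Ea n X + Ea n Y.
Proof. by rewrite /Ealg -big_split; apply: eq_bigr => s _; rewrite mulrDr. Qed.

Lemma Ealg_Z n c (X : seq 'I_K -> R) : Ea n (fun s => c * X s) = c * Ea n X.
Proof. by rewrite /Ealg mulr_sumr; apply: eq_bigr => s _; rewrite mulrCA. Qed.

Lemma Ealg_cst n c : Ea n (fun _ => c) = c.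
Proof.
elim: n => [|n IH]; first by rewrite /Ealg sum_tuple0 /= mul1r.
rewrite Ealg_step -[RHS]IH; congr Ealg; apply: funext => s.
by rewrite -mulr_suml q_sum1 mul1r.
Qed.

Variable T : nat.
Hypothesis Hell : forall t j, (t < T)%N -> 0 <= ell t j <= 1.

Lemma phibar_cons j s : phibar g E ell (j :: s) =
  phibar g E ell s + phi E (size s) (lhat ell (size s) (q s) j).
Proof. by []. Qed.

Lemma phi_entry s j i :
  phi E (size s) (lhat ell (size s) (q s) j) 0 i =
  if E (size s) i == j then ell (size s) j / q s 0 j else 0.
Proof. by rewrite !mxE. Qed.

Lemma phibar_entry j s i : phibar g E ell (j :: s) 0 i =
  phibar g E ell s 0 i + (if E (size s) i == j then ell (size s) j / q s 0 j else 0).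
Proof. by rewrite -phi_entry phibar_cons [LHS]mxE. Qed.

Lemma v_ge0 s j i : (size s < T)%N -> 0 <= phi E (size s) (lhat ell (size s) (q s) j) 0 i.
Proof.
move=> Hs; rewrite phi_entry; case: ifP => // _.
by rewrite divr_ge0 ?q_ge0 //; case/andP: (Hell _ j Hs).
Qed.

Lemma phibar_ge0 s : (size s <= T)%N -> forall i, 0 <= phibar g E ell s 0 i.
Proof.
elim: s => [|j s IH] Hs i; first by rewrite mxE.
rewrite phibar_cons mxE addr_ge0 //; first by have := IH (ltnW Hs) i.
by have := v_ge0 s j i Hs.
Qed.

Lemma dot_v s j : q s 0 j != 0 ->
  dotv (phi E (size s) (lhat ell (size s) (q s) j)) (g (phibar g E ell s)) = ell (size s) j.
Proof.
move=> qj; rewrite /dotv.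
transitivity (\sum_(i | E (size s) i == j) ell (size s) j / q s 0 j * g (phibar g E ell s) 0 i).
  rewrite [RHS]big_mkcond /=; apply: eq_bigr => i _; rewrite phi_entry; case: ifP => //; by rewrite mul0r.
rewrite -mulr_sumr.
have -> : \sum_(i | E (size s) i == j) g (phibar g E ell s) 0 i = q s 0 j by rewrite /qnext /psi mxE.
by rewrite divfK.
Qed.

Lemma infnorm_v s j : (size s < T)%N ->
  infnorm (phi E (size s) (lhat ell (size s) (q s) j)) <= ell (size s) j / q s 0 j.
Proof.
move=> Hs.
have l0 : 0 <= ell (size s) j / q s 0 j by rewrite divr_ge0 ?q_ge0 //; case/andP: (Hell _ j Hs).
rewrite /infnorm; apply: bigmax_le => // i _.
rewrite phi_entry; case: ifP => _; first by rewrite ger0_norm.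
by rewrite normr0.
Qed.

Section Pw.
Variables (Phi : 'rV[R]_N -> R) (eps : R).
Hypothesis Hd : forall L, differentiable Phi L /\ forall h, 'd Phi L h = dotv h (g L).
Hypothesis Hs : forall (t : nat) (v : nat -> 'rV[R]_N),
     (forall s i, (s <= t)%N -> 0 <= v s 0 i) ->
     (Dinf (g (\sum_(s < t) v s)%R) (g (\sum_(s < t.+1) v s)%R)
        <= (eps * infnorm (v t))%:E)%E.
Hypothesis eps0 : 0 <= eps.

Lemma pointwise s : (size s <= T)%N -> hp s != 0 ->
  cumloss ell s - eps * hatterm g E ell s <= Phi (phibar g E ell s) - Phi 0.
Proof.
elim: s => [|j s IH] Hsz Hh; first by rewrite /= !subrr mulr0.
move: Hh => /=; rewrite mulf_eq0 negb_or => /andP[hs qj].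
have Hlt : (size s < T)%N by [].
have IH' := IH (ltnW Hlt) hs.
set L := phibar g E ell s.
set v := phi E (size s) (lhat ell (size s) (q s) j).
have St := @step R N Phi g eps Hd Hg Hs eps0 L v (phibar_ge0 s (ltnW Hlt)) (fun i => v_ge0 s j i Hlt).
rewrite dot_v // in St.
have Hinf := infnorm_v s j Hlt.
have lj := Hell _ j Hlt.
move: lj => /andP[l0 l1].
have e1 : (lhat ell (size s) (q s) j 0 j) ^+ 2 * q s 0 j = ell (size s) j / q s 0 j * ell (size s) j.
  by rewrite mxE eqxx expr2 -mulrA divfK.
have e2 : eps * infnorm v * ell (size s) j <= eps * (ell (size s) j / q s 0 j) * ell (size s) j.
  by rewrite ler_wpM2r // ler_wpM2l.
rewrite /= e1.
change (phibar g E ell (j :: s)) with (L + v).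
lra.
Qed.
End Pw.

Lemma phibar_bound n i : (n <= T)%N ->
  Ea n (fun s => phibar g E ell s 0 i) <= \sum_(t < n) ell t (E t i).
Proof.
elim: n => [|n IH] Hn.
  by rewrite /Ealg sum_tuple0 /= mxE mul1r big_ord0.
rewrite Ealg_step big_ord_recr /=.
apply: (@le_trans _ _ (Ea n (fun s => phibar g E ell s 0 i + ell n (E n i)))).
  apply: Ealg_le => s.
  have -> : \sum_j q s 0 j * phibar g E ell (j :: s) 0 i =
            \sum_j q s 0 j * (phibar g E ell s 0 i +
               (if E (size s) i == j then ell (size s) j / q s 0 j else 0)).
    by apply: eq_bigr => j _; rewrite phibar_entry.
  rewrite size_tuple.
  under eq_bigr => j _ do rewrite mulrDr.
  rewrite big_split /= -mulr_suml q_sum1 mul1r lerD2l.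
  rewrite (bigD1 (E n i)) //= eqxx big1 ?addr0; last first.
    by move=> j /negbTE ji; rewrite eq_sym ji mulr0.
  have [->|qn] := eqVneq (q s 0 (E n i)) 0.
    by rewrite mul0r; case/andP: (Hell _ (E n i) Hn).
  by rewrite mulrC divfK.
by rewrite Ealg_D Ealg_cst lerD2r IH // ltnW.
Qed.
End Algo.
Section Pot.
Lemma ebasis_simplex (R : realType) (N : nat) (i : 'I_N) :
  @simplex R N (\row_k ((k == i)%:R : R)).
Proof.
split.
  by move=> k; rewrite mxE ler0n.
rewrite (bigD1 i) //= mxE eqxx big1 ?addr0 // => k /negbTE ki.
by rewrite mxE ki.
Qed.

Lemma dotv_ebasis (R : realType) (N : nat) (L : 'rV[R]_N) (i : 'I_N) :
  dotv L (\row_k ((k == i)%:R : R)) = L 0 i.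
Proof.
rewrite /dotv (bigD1 i) //= mxE eqxx mulr1 big1 ?addr0 // => k /negbTE ki.
by rewrite mxE ki mulr0.
Qed.

Lemma dotv0l (R : realType) (N : nat) (p : 'rV[R]_N) : dotv 0 p = 0%R.
Proof. by rewrite /dotv big1 // => k _; rewrite mxE mul0r. Qed.

Lemma pot_bound (R : realType) (N : nat)
  (d : measure_display) (Omega : measurableType d) (P : probability Omega R)
  (Zt : Type) (Z : Omega -> Zt) (F : 'rV[R]_N -> Zt -> R) (r : R) :
  (forall L, P.-integrable setT (pertmin Z F L)) ->
  measurable_fun setT (Frange Z F) ->
  (\int[P]_w Frange Z F w = r%:E)%E ->
  forall L i, (Phitilde P Z F L - Phitilde P Z F 0 <= L 0 i + r)%R.
Proof.
move=> Hint Hm Hr L i.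
set e := \row_k ((k == i)%:R : R).
have he := @ebasis_simplex R N i.
set a := pertmin Z F L; set b := pertmin Z F 0.
have ha : forall w, (a w <= (L 0 i + F e (Z w))%:E)%E.
  move=> w; apply: ereal_inf_lbound; exists e => //.
  by rewrite /e dotv_ebasis.
have hb : forall w, (ereal_inf [set (F p (Z w))%:E | p in @simplex R N] <= b w)%E.
  move=> w; apply: le_ereal_inf_tmp => y [p hp <-].
  by rewrite dotv0l add0r; apply: ereal_inf_lbound; exists p.
have hsup : forall w, ((F e (Z w))%:E <= ereal_sup [set (F p (Z w))%:E | p in @simplex R N])%E.
  by move=> w; apply: ereal_sup_ubound; exists e.
have hinf : forall w, (ereal_inf [set (F p (Z w))%:E | p in @simplex R N] <= (F e (Z w))%:E)%E.
  by move=> w; apply: ereal_inf_lbound; exists e.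
have Fr0 : forall w, (0 <= Frange Z F w)%E.
  move=> w; rewrite /Frange.
  rewrite -(subee (x := (F e (Z w))%:E)) //.
  exact: leeB.
have iFr : P.-integrable setT (Frange Z F).
  apply/integrableP; split => //.
  under eq_integral do rewrite gee0_abs //.
  by rewrite Hr ltry.
have icst : P.-integrable setT (cst (L 0 i)%:E).
  exact: (finite_measure_integrable_cst P (L 0 i) measurableT).
have pw : forall w, ((a \- b)%E w <= (fun w => cst (L 0 i)%:E w + Frange Z F w)%E w)%E.
  move=> w /=; apply: (le_trans (leeB (ha w) (hb w))).
  rewrite /Frange addeA EFinD.
  apply: leeB => //; apply: leeD => //.
have H1 := le_integral measurableT (integrableB measurableT (Hint L) (Hint 0)) (integrableD measurableT icst iFr) (fun w _ => pw w).
rewrite integralB // in H1. rewrite integralD // (@integral_cst _ _ _ P setT measurableT) in H1.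
set m := (X in ((L 0 i)%:E * X)%E) in H1.
have P1 : m = 1%E by rewrite /m; apply: probability_setT.
rewrite P1 mule1 Hr in H1.
have fa := integrable_fin_num measurableT (Hint L).
have fb := integrable_fin_num measurableT (Hint 0).
by rewrite -lee_fin EFinB /Phitilde !fineK // -EFinD.
Qed.
End Pot.
Lemma Frange_ge0 (R : realType) (N : nat) (d : measure_display) (Omega : measurableType d)
  (Zt : Type) (Z : Omega -> Zt) (F : 'rV[R]_N -> Zt -> R) :
  (0 < N)%N -> forall w, (0 <= Frange Z F w)%E.
Proof.
move=> N0 w; pose i : 'I_N := Ordinal N0.
set e := \row_k ((k == i)%:R : R).
have he := @ebasis_simplex R N i.
rewrite /Frange -(subee (x := (F e (Z w))%:E)) //.
by apply: leeB; [apply: ereal_sup_ubound | apply: ereal_inf_lbound]; exists e.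
Qed.

Theorem lemma9 (R : realType) (K N T : nat)
  (d : measure_display) (Omega : measurableType d) (P : probability Omega R)
  (Zt : Type) (Z : Omega -> Zt) (F : 'rV[R]_N -> Zt -> R)
  (g : 'rV[R]_N -> 'rV[R]_N) (eps : R)
  (E : nat -> 'I_N -> 'I_K) (ell : nat -> 'I_K -> R) :
  (0 < N)%N ->
  (* oblivious losses in [0,1]^K *)
  (forall t j, (t < T)%N -> 0 <= ell t j <= 1) ->
  (* Phi~ is well defined: the perturbed minimum is integrable *)
  (forall L, P.-integrable setT (pertmin Z F L)) ->
  (* the expectation E[max_p F - min_p F] is well defined *)
  measurable_fun setT (Frange Z F) ->
  (* g = grad Phi~, with values in Delta_N *)
  (forall L, differentiable (Phitilde P Z F) L /\
     forall h, 'd (Phitilde P Z F) L h = dotv h (g L)) ->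
  (forall L, @simplex R N (g L)) ->
  (* DiffStable(D_infty, ||.||_infty) at level eps *)
  (forall (t : nat) (v : nat -> 'rV[R]_N),
     (forall s i, (s <= t)%N -> 0 <= v s 0 i) ->
     (Dinf (g (\sum_(s < t) v s)%R) (g (\sum_(s < t.+1) v s)%R)
        <= (eps * infnorm (v t))%:E)%E) ->
  ((Ealg g E ell T (cumloss ell))%:E - Lstar E ell T
     <= (eps * Ealg g E ell T (hatterm g E ell))%:E
        + \int[P]_w Frange Z F w)%E.
Proof.
move=> N0 Hell Hint Hm Hd Hg Hs.
pose i0 : 'I_N := Ordinal N0.
have eps0 : 0 <= eps.
  pose vv := fun s : nat => if s == 0%N then (0 : 'rV[R]_N) else const_mx 1.
  have Hvv : forall s i, (s <= 1)%N -> 0 <= vv s 0 i.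
    by move=> s i _; rewrite /vv; case: (s == 0%N); rewrite mxE ?ler01.
  have := Hs 1%N vv Hvv.
  rewrite big_ord1 big_ord_recr big_ord1 /= /vv /= add0r.
  have inf1 : infnorm (const_mx 1 : 'rV[R]_N) = 1.
    apply/le_anti/andP; split.
      rewrite /infnorm; apply: bigmax_le => // i _; by rewrite mxE normr1.
    by rewrite /infnorm; apply: le_trans (le_bigmax _ _ i0); rewrite mxE normr1.
  rewrite inf1 mulr1 => H.
  have H2 : (Dinf_term (g 0%R) (g (const_mx 1%R)) (setTfor 'I_N) <= eps%:E)%E.
    by apply: le_trans H; rewrite /Dinf; apply: le_bigmax.
  have m1 : forall p : 'rV[R]_N, @simplex R N p -> massB p (setTfor 'I_N) = 1.
    move=> p Hp; have Hp2 : \sum_i p 0 i = 1 := Hp.2.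
    rewrite /massB -Hp2; apply: eq_bigl => i; by rewrite inE.
  by move: H2; rewrite /Dinf_term !m1 // oner_eq0 /= divr1 ln1 lee_fin.
case Hr : (\int[P]_w Frange Z F w)%E => [r| |].
- have PB := @pot_bound R N d Omega P Zt Z F r Hint Hm Hr.
  have [i _ Li] := @eq_bigmin _ _ 'I_N +oo%E i0 xpredT
     (fun i => (\sum_(t < T) ell t (E t i))%:E) isT (fun i _ => leey _).
  rewrite /Lstar Li.
  have H1 : Ealg g E ell T (cumloss ell) <=
      Ealg g E ell T (fun s => (eps * hatterm g E ell s + phibar g E ell s 0 i) + r).
    apply: ler_sum => s _.
    have [->|hs] := eqVneq (histprob g E ell s) 0; first by rewrite !mul0r.
    rewrite ler_wpM2l ?(@hp_ge0 R K N g E ell Hg) //.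
    have := @pointwise R K N g E ell Hg T Hell (Phitilde P Z F) eps Hd Hs eps0 s
      (eq_leq (size_tuple s)) hs.
    have := PB (phibar g E ell s) i.
    lra.
  rewrite Ealg_D Ealg_D Ealg_Z (@Ealg_cst R K N g E ell Hg) in H1.
  have H2 := @phibar_bound R K N g E ell Hg T Hell T i (leqnn T).
  rewrite -EFinB -EFinD lee_fin.
  lra.
- by rewrite addey // leey.
- have : (0 <= \int[P]_w Frange Z F w)%E.
    by apply: integral_ge0 => w _; apply: Frange_ge0.
  by rewrite Hr.
Qed.
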